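(* For every integer $N\ge 1$ there exists a $2$-$(4,N,2)$-tropical protocol.
   Context: Tropical arithmetic on $\mathbb{R}\cup\{\infty\}$: $x\oplus y=\min(x,y)$, $x\odot y=x+y$, with $x\oplus\infty=x$ and $x\odot\infty=\infty$; for a matrix $S$ and vector $\mathbf{x}$, $(S\odot\mathbf{x})_t=\min_j(S_{tj}+x_j)$. An $R$-$(T,N,D)$-tropical protocol consists of $R$ functions $\mathcal{S}^{(1)},\dots,\mathcal{S}^{(R)}$: $S^{(1)}=\mathcal{S}^{(1)}()$ is a fixed matrix, and for $r\ge 2$, $S^{(r)}=\mathcal{S}^{(r)}$ applied to the results $\bigl(S^{(1)};\dots;S^{(r-1)}\bigr)\odot\mathbf{x}$ of all previous rounds (vertical stacking); each $S^{(r)}$ has $N$ columns, entries in $\{0\}\cup\mathbb{N}\cup\{\infty\}$, and a number of rows that may depend on previous results, the total number of rows being at most $T$ for every $\mathbf{x}$; and the final result $\bigl(S^{(1)};\dots;S^{(R)}\bigr)\odot\mathbf{x}$ determines $\mathbf{x}$ uniquely among all $\mathbf{x}\in(\{0\}\cup\mathbb{N}\cup\{\infty\})^N$ with at most $D$ finite entries. It is within maximum delay $\ell$ if all schedule matrices use only entries in $\{0,1,\dots,\ell,\infty\}$. *)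

(* Defs.v *)
From mathcomp Require Import all_boot.
Set Implicit Arguments. Unset Strict Implicit. Unset Printing Implicit Defensive.

(* Extended naturals {0} ∪ ℕ ∪ {∞}: [Some n] is the natural n, [None] is ∞. *)
Definition ext := option nat.

Definition tmul (a b : ext) : ext :=
  match a, b with Some m, Some n => Some (m + n) | _, _ => None end.

Definition tadd (a b : ext) : ext :=
  match a, b with
  | None, _ => b
  | _, None => a
  | Some m, Some n => Some (minn m n)
  end.

Definition row N := {ffun 'I_N -> ext}.
Definition vec N := {ffun 'I_N -> ext}.

Definition row_apply N (s : row N) (x : vec N) : ext :=
  \big[tadd/None]_(j < N) tmul (s j) (x j).

Definition mat_apply N (S : seq (row N)) (x : vec N) : seq ext :=
  map (fun s => row_apply s x) S.

(* A round function S^(r): maps the stacked results of all previous rounds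
   to the schedule matrix of round r (a list of rows; its number of rows may
   depend on previous results).  S^(1) is applied to the empty list of
   previous results, hence is a fixed matrix. *)
Definition round_fun N := seq ext -> seq (row N).

Definition protocol R N := R.-tuple (round_fun N).

Definition run_rounds N (fs : seq (round_fun N)) (x : vec N) : seq ext :=
  foldl (fun res f => res ++ mat_apply (f res) x) [::] fs.

Definition result R N (P : protocol R N) (x : vec N) : seq ext :=
  run_rounds P x.

Definition nfinite N (x : vec N) : nat := #|[set j | x j != None]|.

Definition is_tropical_protocol R T N D (P : protocol R N) : Prop :=
  (forall x : vec N, size (result P x) <= T) /\
  (forall x y : vec N, nfinite x <= D -> nfinite y <= D ->
     result P x = result P y -> x = y).
Arguments is_tropical_protocol R T N D P : clear implicits.

(* Main.v *)
Require Import Defs.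
From mathcomp Require Import all_boot.
From HB Require Import structures.
From mathcomp Require Import zify.

Set Implicit Arguments. Unset Strict Implicit. Unset Printing Implicit Defensive.

Lemma taddA : associative tadd.
Proof. by case=> [a|] [b|] [c|] //=; rewrite minnA. Qed.
Lemma taddC : commutative tadd.
Proof. by case=> [a|] [b|] //=; rewrite minnC. Qed.
Lemma tadd0 : left_id None tadd.
Proof. by case. Qed.
HB.instance Definition _ := Monoid.isComLaw.Build ext None tadd taddA taddC tadd0.

Section P.
Variable N : nat.

Definition rowof (w : nat -> ext) : row N := [ffun j => w (val j)].
Definition p0 : vec N := [ffun => None].
Definition p1 e w : vec N := [ffun j : 'I_N => if val j == e then Some w else None].
Definition p2 e1 w1 e2 w2 : vec N :=
  [ffun j : 'I_N => if val j == e1 then Some w1 else if val j == e2 then Some w2 else None].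

Definition w3 c j : ext := if j < c then Some (2*j) else if c < j then Some (2*j + N) else None.
Definition w4 c j : ext := if j < c then Some (N + j) else if c < j then Some j else None.

Definition f1 : round_fun N := fun _ => [:: rowof (fun _ => Some 0); rowof (fun j => Some j)].
Definition cof (res : seq ext) : nat :=
  match res with [:: Some q; Some p] => p - q | _ => 0 end.
Definition f2 : round_fun N := fun res => [:: rowof (w3 (cof res)); rowof (w4 (cof res))].
Definition Pr : protocol 2 N := [tuple f1; f2].

Definition dec (l : seq ext) : vec N :=
  match l with
  | [:: Some q; Some p; r; s] =>
    let c := p - q in
    match r, s with
    | Some r, Some s =>
      if (r < p + N) && (s < q + N) then p2 (r - p) (p - (r - p)) (s - q) q
      else if r < s then p2 c q (r + N - s) (s - N - (r + N - s))
      else p2 c q (r - s - N) (s - (r - s - N))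
    | _, _ => p1 c q
    end
  | _ => p0
  end.

Lemma resE x : result Pr x =
  [:: row_apply (rowof (fun _ => Some 0)) x; row_apply (rowof (fun j => Some j)) x;
      row_apply (rowof (w3 (cof [:: row_apply (rowof (fun _ => Some 0)) x; row_apply (rowof (fun j => Some j)) x]))) x;
      row_apply (rowof (w4 (cof [:: row_apply (rowof (fun _ => Some 0)) x; row_apply (rowof (fun j => Some j)) x]))) x].
Proof. by []. Qed.

Lemma tmul0 a : tmul a None = None. Proof. by case: a. Qed.

Lemma ra0 w : row_apply (rowof w) p0 = None.
Proof. by rewrite /row_apply big1 // => j _; rewrite !ffunE tmul0. Qed.

Lemma ra1 w e u : e < N -> row_apply (rowof w) (p1 e u) = tmul (w e) (Some u).
Proof.
move=> he; rewrite /row_apply (bigD1 (Ordinal he)) //= big1 => [|j hj].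
  by rewrite !ffunE /= eqxx; case: (tmul _ _).
rewrite !ffunE; case: eqP => [hje|]; last by rewrite tmul0.
by case/eqP: hj; apply: val_inj.
Qed.

Lemma ra2 w e1 u e2 v : e1 < N -> e2 < N -> e1 != e2 ->
  row_apply (rowof w) (p2 e1 u e2 v) = tadd (tmul (w e1) (Some u)) (tmul (w e2) (Some v)).
Proof.
move=> h1 h2 h12; rewrite /row_apply (bigD1 (Ordinal h1)) //=.
have hne : Ordinal h2 != Ordinal h1 by rewrite -val_eqE /= eq_sym.
rewrite (bigD1 (Ordinal h2)) //= big1 => [|j /andP [hj1 hj2]].
  rewrite !ffunE /= eqxx eq_sym (negbTE h12) eqxx.
  by case: (tmul _ _); case: (tmul _ _).
rewrite !ffunE; case: eqP => [hje|_].
  by case/eqP: hj1; apply: val_inj.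
case: eqP => [hje|]; last by rewrite tmul0.
by case/eqP: hj2; apply: val_inj.
Qed.

Lemma p2C e1 u e2 v : e1 != e2 -> p2 e1 u e2 v = p2 e2 v e1 u.
Proof.
move=> h; apply/ffunP => j; rewrite !ffunE.
case: eqP => [->|//]; by rewrite (negbTE h).
Qed.

End P.
Ltac solve_leaf := first [ exfalso; lia | congr (p2 _ _ _ _ _); lia
  | rewrite p2C; [congr (p2 _ _ _ _ _); lia | apply/eqP; lia] ].
Ltac crush := repeat (match goal with |- context [if ?b then _ else _] => case: ifP => ? end; rewrite /=); solve_leaf.
Lemma dec_p2 N i u k v : i < N -> k < N -> i != k -> i + u <= k + v ->
  dec N (result (Pr N) (p2 N i u k v)) = p2 N i u k v.
Proof.
move=> hi hk hik0 hle; have hik : i <> k by apply/eqP.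
rewrite resE !ra2 //= /w3 /w4.
have hP : minn (i + u) (k + v) = i + u by apply/minn_idPl.
rewrite hP /dec.
case: (leqP u v) => huv.
  crush.
crush.

Qed.
Lemma shape N (x : vec N) : nfinite x <= 2 -> x = p0 N \/ (exists i u, i < N /\ x = p1 N i u) \/
  (exists i u k v, [/\ i < N, k < N, i != k & x = p2 N i u k v]).
Proof.
rewrite /nfinite; set A := [set j | x j != None] => hA.
have inA j : (j \in A) = (x j != None) by rewrite inE.
have hc : #|A| = 0 \/ #|A| = 1 \/ #|A| = 2 by lia.
case: hc => [/cards0_eq h0|[/eqP/cards1P [i0 h1]|/eqP/cards2P [i0 [k0 [hne h2]]]]].
- left; apply/ffunP => j; rewrite ffunE.
  by apply/eqP; apply: negbNE; rewrite -inA h0 inE.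
- right; left.
  have : i0 \in A by rewrite h1 inE.
  rewrite inA; case hx: (x i0) => [u|] // _.
  exists (val i0), u; split; first exact: ltn_ord.
  apply/ffunP => j; rewrite ffunE val_eqE; case: eqP => [->//|hj].
  apply/eqP; apply: negbNE; rewrite -inA h1 inE; exact/eqP.
- right; right.
  have : i0 \in A by rewrite h2 !inE eqxx.
  rewrite inA; case hx: (x i0) => [u|] // _.
  have : k0 \in A by rewrite h2 !inE eqxx orbT.
  rewrite inA; case hy: (x k0) => [v|] // _.
  exists (val i0), u, (val k0), v; split; try exact: ltn_ord; first by rewrite val_eqE.
  apply/ffunP => j; rewrite ffunE !val_eqE; case: eqP => [->//|hj].
  case: eqP => [->//|hj2].
  apply/eqP; apply: negbNE; rewrite -inA h2 !inE; apply/norP; split; exact/eqP.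
Qed.
Lemma dec_p0 N : dec N (result (Pr N) (p0 N)) = p0 N.
Proof. by rewrite resE !ra0. Qed.

Lemma dec_p1 N i u : i < N -> dec N (result (Pr N) (p1 N i u)) = p1 N i u.
Proof.
move=> hi; rewrite resE !ra1 //= /w3 /w4 /dec.
have -> : i + u - (0 + u) = i by lia.
by rewrite ltnn.
Qed.

Lemma dec_p2g N i u k v : i < N -> k < N -> i != k ->
  dec N (result (Pr N) (p2 N i u k v)) = p2 N i u k v.
Proof.
move=> hi hk hik; case: (leqP (i + u) (k + v)) => h; first exact: dec_p2.
rewrite p2C //; apply: dec_p2 => //; [by rewrite eq_sym | lia].
Qed.

Lemma dec_ok N (x : vec N) : nfinite x <= 2 -> dec N (result (Pr N) x) = x.
Proof.
case/shape => [->|[[i [u [hi ->]]]|[i [u [k [v [hi hk hik ->]]]]]]].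
- exact: dec_p0.
- exact: dec_p1.
- exact: dec_p2g.
Qed.

Theorem mainTheorem16 (N : nat) (hN : 1 <= N) :
  exists P : protocol 2 N, is_tropical_protocol 2 4 N 2 P.
Proof.
exists (Pr N); split.
  by move=> x; rewrite resE.
move=> x y hx hy hxy.
by rewrite -(dec_ok hx) -(dec_ok hy) hxy.
Qed.
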